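(* Under Assumptions 1–2, assume $r_\ell<\min\{m_\ell,n_\ell\}$ for all $\ell$ and $\Delta>0$. Let $T$ be an integer with $T\ge 64/(3\underline{\delta})$ and choose $\beta_1=1$, $\tau=\lceil 64/(3\underline{\delta}\beta_1)\rceil$, and $\eta=\Big(4L+\sqrt{\tfrac{80L^2}{3\underline{\delta}\beta_1^2}}+\sqrt{\tfrac{80\tau^2L^2}{3\underline{\delta}}}+\sqrt{\tfrac{16\tau L^2}{3\beta_1}}\Big)^{-1}$. Then GaLore using deterministic gradients and MSGD with momentum projection satisfies $\frac1T\sum_{t=0}^{T-1}\|\nabla f(x^{(t)})\|_2^2\le C\,\frac{L\Delta}{\underline{\delta}^{5/2}T}$ for an absolute constant $C$.
   Context: Parameters $x=(\mathrm{vec}(X_1)^\top,\dots,\mathrm{vec}(X_{N_L})^\top)^\top\in\mathbb{R}^d$, $X_\ell\in\mathbb{R}^{m_\ell\times n_\ell}$; $\nabla_\ell$ is the gradient w.r.t. $X_\ell$. Assumption 1: $\inf f>-\infty$. Assumption 2: $\nabla f$ is $L$-Lipschitz in $\|\cdot\|_2$. $\Delta=f(x^{(0)})-\inf_x f(x)$, $\delta_\ell=r_\ell/\min\{m_\ell,n_\ell\}$, $\underline\delta=\min_\ell\delta_\ell$. Algorithm (GaLore/GoLore with MSGD and momentum projection, ''MP''): inputs $x^{(0)}$, $\eta>0$, integer $\tau\ge1$, $\beta_1\in(0,1]$, ranks $r_\ell$; $M_\ell^{(-1)}=0$. For $t=0,\dots,T-1$ and each $\ell$: obtain a gradient matrix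 $G_\ell^{(t)}$ (variant-dependent). If $t\equiv0\pmod\tau$, choose new $P_\ell^{(t)}\in\mathbb{R}^{m_\ell\times r_\ell}$, $Q_\ell^{(t)}\in\mathbb{R}^{n_\ell\times r_\ell}$: in GaLore take an SVD $G_\ell^{(t)}=U\Sigma V^\top$ (singular values nonincreasing) and $P_\ell^{(t)}=U[:,:r_\ell]$, $Q_\ell^{(t)}=V[:,:r_\ell]$; in GoLore sample $P_\ell^{(t)}$, $Q_\ell^{(t)}$ uniformly (Haar) from the Stiefel manifolds $\mathrm{St}_{m_\ell,r_\ell}$, $\mathrm{St}_{n_\ell,r_\ell}$ (where $\mathrm{St}_{m,r}=\{P\in\mathbb{R}^{m\times r}:P^\top P=I_r\}$), independently of everything else. Otherwise $P_\ell^{(t)}=P_\ell^{(t-1)}$, $Q_\ell^{(t)}=Q_\ell^{(t-1)}$. If $m_\ell\le n_\ell$: $M_\ell^{(t)}=(1-\beta_1)(P_\ell^{(t)})^\top P_\ell^{(t-1)}M_\ell^{(t-1)}+\beta_1(P_\ell^{(t)})^\top G_\ell^{(t)}$ and $X_\ell^{(t+1)}=X_\ell^{(t)}-\eta P_\ell^{(t)}M_\ell^{(t)}$. If $m_\ell>n_\ell$: $M_\ell^{(t)}=(1-\beta_1)M_\ell^{(t-1)}(Q_\ell^{(t-1)})^\top Q_\ell^{(t)}+\beta_1G_\ell^{(t)}Q_\ell^{(t)}$ and $X_\ell^{(t+1)}=X_\ell^{(t)}-\eta M_\ell^{(t)}(Q_\ell^{(t)})^\top$. (At $t=0$ the term involving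 $M^{(-1)}=0$ vanishes.) Deterministic variant: $G_\ell^{(t)}=\nabla_\ell f(x^{(t)})$ for all $t$, with GaLore projections. *)

(* Defs.v *)
From HB Require Import structures.
From mathcomp Require Import all_boot all_order all_algebra.
From mathcomp Require Import all_classical all_reals all_analysis.
Set Implicit Arguments. Unset Strict Implicit. Unset Printing Implicit Defensive.
Import Order.TTheory GRing.Theory Num.Theory.
Local Open Scope ring_scope.

Section Params.
Variables (R : realType) (NL : nat) (m n : 'I_NL -> nat).

(* The parameter x = (vec(X_1),...,vec(X_NL)), stored layerwise. *)
Definition param := forall l : 'I_NL, 'M[R]_(m l, n l).

Definition padd (x y : param) : param := fun l => x l + y l.
Definition psub (x y : param) : param := fun l => x l - y l.
Definition pscale (a : R) (x : param) : param := fun l => a *: x l.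

Definition pinner (x y : param) : R :=
  \sum_(l < NL) \sum_(i < m l) \sum_(j < n l) x l i j * y l i j.

Definition psqnorm (x : param) : R := pinner x x.
Definition pnorm (x : param) : R := Num.sqrt (psqnorm x).

Definition is_gradient (f : param -> R) (G : param -> param) : Prop :=
  forall x v : param,
    is_derive (0 : R) (1 : R) (fun t : R => f (padd x (pscale t v))) (pinner (G x) v).

Definition lipschitz_grad (G : param -> param) (L : R) : Prop :=
  forall x y : param, pnorm (psub (G x) (G y)) <= L * pnorm (psub x y).

Definition bounded_below (f : param -> R) : Prop :=
  exists c : R, forall x : param, c <= f x.

Definition Delta (f : param -> R) (x0 : param) : R :=
  f x0 - inf (range f).
End Params.

Definition is_svd (R : realType) (p q : nat) (G : 'M[R]_(p, q))
    (U : 'M[R]_p) (S : 'M[R]_(p, q)) (V : 'M[R]_q) : Prop :=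
  U^T *m U = 1%:M /\ V^T *m V = 1%:M /\
      (forall (i : 'I_p) (j : 'I_q), (i : nat) <> j -> S i j = 0) /\
      (forall (i : 'I_p) (j : 'I_q), 0 <= S i j) /\
      (forall (i1 : 'I_p) (j1 : 'I_q) (i2 : 'I_p) (j2 : 'I_q),
          (i1 : nat) = j1 -> (i2 : nat) = j2 -> (i1 <= i2)%N -> S i2 j2 <= S i1 j1) /\
    G = U *m S *m V^T.

(* GaLore projection choice: P = U[:, :r], Q = V[:, :r] for some SVD of G. *)
Definition galore_proj (R : realType) (p q r : nat) (G : 'M[R]_(p, q))
    (P : 'M[R]_(p, r)) (Q : 'M[R]_(q, r)) : Prop :=
  exists U S V, is_svd G U S V /\
    P = U *m (pid_mx r : 'M[R]_(p, r)) /\ Q = V *m (pid_mx r : 'M[R]_(q, r)).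

(* The momentum for layer l is Mp (shape r x n, used when m <= n) or
   Mq (shape m x r, used when m > n); the unused one is irrelevant.
   M^(-1) = 0, so at t = 0 the momentum-carrying term vanishes. *)
Definition galore_mp_det_run (R : realType) (NL : nat) (m n r : 'I_NL -> nat)
    (G : param R m n -> param R m n) (eta beta1 : R) (tau : nat) (x0 : param R m n)
    (x : nat -> param R m n)
    (P : nat -> forall l : 'I_NL, 'M[R]_(m l, r l))
    (Q : nat -> forall l : 'I_NL, 'M[R]_(n l, r l))
    (Mp : nat -> forall l : 'I_NL, 'M[R]_(r l, n l))
    (Mq : nat -> forall l : 'I_NL, 'M[R]_(m l, r l)) : Prop :=
  x 0%N = x0 /\
  forall (t : nat) (l : 'I_NL),
    let Gt := G (x t) l in
    (if (t %% tau == 0)%N then galore_proj Gt (P t l) (Q t l)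
     else (P t l = P t.-1 l /\ Q t l = Q t.-1 l)) /\
    (if (m l <= n l)%N then
       Mp t l = (if t is t'.+1 then (1 - beta1) *: ((P t l)^T *m P t' l *m Mp t' l)
                 else 0) + beta1 *: ((P t l)^T *m Gt) /\
       x t.+1 l = x t l - eta *: (P t l *m Mp t l)
     else
       Mq t l = (if t is t'.+1 then (1 - beta1) *: (Mq t' l *m (Q t' l)^T *m Q t l)
                 else 0) + beta1 *: (Gt *m Q t l) /\
       x t.+1 l = x t l - eta *: (Mq t l *m (Q t l)^T)).

(* underline delta = min_l r_l / min(m_l, n_l)  (NL >= 1; each delta_l <= 1) *)
Definition delta_min (R : realType) (NL : nat) (m n r : 'I_NL -> nat) : R :=
  \big[Order.min/1]_(l < NL) ((r l)%:R / (minn (m l) (n l))%:R).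

(* Main.v *)
Require Import Defs.
From HB Require Import structures.
From mathcomp Require Import all_boot all_order all_algebra.
From mathcomp Require Import all_classical all_reals all_analysis.
From mathcomp Require Import ring lra.
Set Implicit Arguments. Unset Strict Implicit. Unset Printing Implicit Defensive.
Import Order.TTheory GRing.Theory Num.Theory.
Local Open Scope ring_scope.

Definition pS (R : realType) (NL : nat) (m n : 'I_NL -> nat)
  (F : forall l : 'I_NL, 'I_(m l) -> 'I_(n l) -> R) : R :=
  \sum_(l < NL) \sum_(i < m l) \sum_(j < n l) F l i j.

Lemma pS_le (R : realType) (NL : nat) (m n : 'I_NL -> nat)
  (F1 F2 : forall l : 'I_NL, 'I_(m l) -> 'I_(n l) -> R) :
  (forall l i j, F1 l i j <= F2 l i j) -> pS F1 <= pS F2.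
Proof.
by move=> H; apply: ler_sum => l _; apply: ler_sum => i _; apply: ler_sum => j _.
Qed.

Lemma pS_add (R : realType) (NL : nat) (m n : 'I_NL -> nat)
  (F1 F2 : forall l : 'I_NL, 'I_(m l) -> 'I_(n l) -> R) :
  pS (fun l i j => F1 l i j + F2 l i j) = pS F1 + pS F2.
Proof.
rewrite /pS -big_split; apply: eq_bigr => l _; rewrite -big_split.
by apply: eq_bigr => i _; rewrite -big_split.
Qed.

Lemma pS_scal (R : realType) (NL : nat) (m n : 'I_NL -> nat) (c : R)
  (F : forall l : 'I_NL, 'I_(m l) -> 'I_(n l) -> R) :
  pS (fun l i j => c * F l i j) = c * pS F.
Proof.
rewrite /pS mulr_sumr; apply: eq_bigr => l _; rewrite mulr_sumr.
by apply: eq_bigr => i _; rewrite mulr_sumr.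
Qed.

Lemma pS_ge0 (R : realType) (NL : nat) (m n : 'I_NL -> nat)
  (F : forall l : 'I_NL, 'I_(m l) -> 'I_(n l) -> R) :
  (forall l i j, 0 <= F l i j) -> 0 <= pS F.
Proof.
move=> H; apply: sumr_ge0 => l _; apply: sumr_ge0 => i _; apply: sumr_ge0 => j _; exact: H.
Qed.

Lemma pinnerE (R : realType) (NL : nat) (m n : 'I_NL -> nat) (x y : param R m n) :
  pinner x y = pS (fun l i j => x l i j * y l i j).
Proof. by []. Qed.

Lemma psq_ge0 (R : realType) (NL : nat) (m n : 'I_NL -> nat) (x : param R m n) :
  0 <= psqnorm x.
Proof. rewrite /psqnorm pinnerE; apply: pS_ge0 => l i j; by rewrite -expr2 sqr_ge0. Qed.

Lemma psq_add2 (R : realType) (NL : nat) (m n : 'I_NL -> nat) (a b : param R m n) :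
  psqnorm (padd a b) <= 2 * psqnorm a + 2 * psqnorm b.
Proof.
rewrite /psqnorm !pinnerE -!pS_scal -pS_add; apply: pS_le => l i j.
rewrite /padd !mxE; move: (a l i j) (b l i j) => u v; have := sqr_ge0 (u - v); nra.
Qed.

Lemma psq_sub2 (R : realType) (NL : nat) (m n : 'I_NL -> nat) (a b : param R m n) :
  psqnorm (psub a b) <= 2 * psqnorm a + 2 * psqnorm b.
Proof.
rewrite /psqnorm !pinnerE -!pS_scal -pS_add; apply: pS_le => l i j.
rewrite /psub !mxE; move: (a l i j) (b l i j) => u v; have := sqr_ge0 (u + v); nra.
Qed.

Lemma pS_sub (R : realType) (NL : nat) (m n : 'I_NL -> nat)
  (F1 F2 : forall l : 'I_NL, 'I_(m l) -> 'I_(n l) -> R) :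
  pS (fun l i j => F1 l i j - F2 l i j) = pS F1 - pS F2.
Proof.
rewrite /pS -sumrB; apply: eq_bigr => l _; rewrite -sumrB.
by apply: eq_bigr => i _; rewrite -sumrB.
Qed.

Lemma psq_step (R : realType) (NL : nat) (m n : 'I_NL -> nat) (k e : R)
  (u d : param R m n) : 0 <= k ->
  k * psqnorm (psub u (pscale e d)) <=
  (k + 1) * psqnorm u + k * (k + 1) * e ^+ 2 * psqnorm d.
Proof.
move=> k0; rewrite /psqnorm !pinnerE -!pS_scal -pS_add; apply: pS_le => l i j.
rewrite /psub /pscale !mxE; move: (u l i j) (d l i j) => a b.
have := sqr_ge0 (a + k * e * b); nra.
Qed.

Lemma pamgm (R : realType) (NL : nat) (m n : 'I_NL -> nat) (lam : R)
  (a b : param R m n) :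
  2 * lam * pinner a b <= psqnorm a + lam ^+ 2 * psqnorm b.
Proof.
rewrite /psqnorm !pinnerE -!pS_scal -pS_add; apply: pS_le => l i j.
move: (a l i j) (b l i j) => u v.
have := sqr_ge0 (u - lam * v); nra.
Qed.

Lemma pinner_subl (R : realType) (NL : nat) (m n : 'I_NL -> nat)
  (a b c : param R m n) : pinner (psub a b) c = pinner a c - pinner b c.
Proof.
rewrite !pinnerE -pS_sub; apply: eq_bigr => l _; apply: eq_bigr => i _.
by apply: eq_bigr => j _; rewrite /psub !mxE mulrBl.
Qed.

Lemma psq_scale (R : realType) (NL : nat) (m n : 'I_NL -> nat) (e : R)
  (a : param R m n) : psqnorm (pscale e a) = e ^+ 2 * psqnorm a.
Proof.
rewrite /psqnorm !pinnerE -pS_scal; apply: eq_bigr => l _; apply: eq_bigr => i _.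
by apply: eq_bigr => j _; rewrite /pscale !mxE; ring.
Qed.

Definition fi (R : realType) (p q : nat) (A B : 'M[R]_(p, q)) : R :=
  \sum_(i < p) \sum_(j < q) A i j * B i j.

Lemma fi_tr (R : realType) (p q : nat) (A B : 'M[R]_(p, q)) :
  fi A B = \tr (A *m B^T).
Proof.
rewrite /fi /mxtrace; apply: eq_bigr => i _; rewrite mxE.
by apply: eq_bigr => j _; rewrite !mxE.
Qed.

Lemma fi_ge0 (R : realType) (p q : nat) (A : 'M[R]_(p, q)) : 0 <= fi A A.
Proof.
by apply: sumr_ge0 => i _; apply: sumr_ge0 => j _; rewrite -expr2 sqr_ge0.
Qed.

Lemma fi_sym (R : realType) (p q : nat) (A B : 'M[R]_(p, q)) : fi A B = fi B A.
Proof. by apply: eq_bigr => i _; apply: eq_bigr => j _; rewrite mulrC. Qed.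

Lemma fi_trT (R : realType) (p q : nat) (A B : 'M[R]_(p, q)) : fi A^T B^T = fi A B.
Proof. by rewrite !fi_tr -mxtrace_tr trmx_mul !trmxK mxtrace_mulC. Qed.

Lemma fi_subsub (R : realType) (p q : nat) (A B : 'M[R]_(p, q)) :
  fi (A - B) (A - B) = fi A A - 2 * fi A B + fi B B.
Proof.
rewrite !fi_tr linearB /= mulmxBl !mulmxBr !linearB /=.
have -> : \tr (B *m A^T) = \tr (A *m B^T) by rewrite -mxtrace_tr trmx_mul trmxK.
ring.
Qed.

Lemma tr_rot (R : realType) (a b c d : nat) (W : 'M[R]_(a, b)) (X : 'M[R]_(b, c))
  (Y : 'M[R]_(c, d)) (Z : 'M[R]_(d, a)) :
  \tr (W *m (X *m (Y *m Z))) = \tr (X *m (Y *m (Z *m W))).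
Proof. by rewrite mxtrace_mulC !mulmxA. Qed.

Lemma fiP1 (R : realType) (p q k : nat) (P : 'M[R]_(p, k)) (A : 'M[R]_(p, q)) :
  P^T *m P = 1%:M ->
  fi A (P *m P^T *m A) = fi (P *m P^T *m A) (P *m P^T *m A).
Proof.
move=> hP; rewrite !fi_tr !trmx_mul !trmxK.
rewrite -!mulmxA mxtrace_mulC -!mulmxA.
rewrite [in RHS]mxtrace_mulC -!mulmxA.
by rewrite hP mulmx1 tr_rot tr_rot.
Qed.

Lemma fiP2 (R : realType) (p q k : nat) (P : 'M[R]_(p, k)) (A : 'M[R]_(p, q)) :
  P^T *m P = 1%:M ->
  fi (P *m P^T *m A) (P *m P^T *m A) <= fi A A.
Proof.
move=> hP; have h := fi_subsub A (P *m P^T *m A).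
rewrite fiP1 // in h.
have := fi_ge0 (A - P *m P^T *m A); rewrite h; lra.
Qed.

Lemma fiPT (R : realType) (p q k : nat) (P : 'M[R]_(p, k)) (A : 'M[R]_(p, q)) :
  P^T *m P = 1%:M ->
  fi (P *m P^T *m A) (P *m P^T *m A) = fi (P^T *m A) (P^T *m A).
Proof.
move=> hP; rewrite !fi_tr !trmx_mul !trmxK -!mulmxA tr_rot.
by rewrite -!mulmxA hP mulmx1.
Qed.

Lemma fi_orthR (R : realType) (p q : nat) (V : 'M[R]_q) (B : 'M[R]_(p, q)) :
  V^T *m V = 1%:M -> fi (B *m V^T) (B *m V^T) = fi B B.
Proof.
by move=> hV; rewrite !fi_tr trmx_mul trmxK -!mulmxA [V^T *m _]mulmxA hV mul1mx.
Qed.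

Lemma fi_orthL (R : realType) (p q : nat) (U : 'M[R]_p) (X : 'M[R]_(p, q)) :
  U^T *m U = 1%:M -> fi (U *m X) (U *m X) = fi X X.
Proof.
move=> hU; rewrite !fi_tr trmx_mul -!mulmxA mxtrace_mulC -!mulmxA hU mulmx1.
by [].
Qed.

Lemma sum_mono (R : realType) (s : nat -> R) (p r : nat) :
  (0 < r)%N -> (r <= p)%N -> (forall i j, (i <= j)%N -> (j < p)%N -> s j <= s i) ->
  r%:R * \sum_(0 <= k < p) s k <= p%:R * \sum_(0 <= k < r) s k.
Proof.
move=> r0 rp mono.
set c := s r.-1.
have h1 : \sum_(r <= k < p) s k <= (p - r)%:R * c.
  apply: (@le_trans _ _ (\sum_(r <= k < p) c)); last by rewrite sumr_const_nat mulr_natl.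
  rewrite big_nat [X in _ <= X]big_nat; apply: ler_sum => k /andP[rk kp].
  by rewrite /c; apply: mono => //; apply: leq_trans (leq_pred r) rk.
have h2 : r%:R * c <= \sum_(0 <= k < r) s k.
  apply: (@le_trans _ _ (\sum_(0 <= k < r) c)); first by rewrite sumr_const_nat subn0 mulr_natl.
  rewrite big_nat [X in _ <= X]big_nat; apply: ler_sum => k /andP[_ kr].
  rewrite /c; apply: mono; first by rewrite -ltnS prednK.
  by rewrite prednK //; apply: leq_trans rp.
rewrite (@big_cat_nat _ _ _ r 0 p) /= //; rewrite natrB // in h1.
have hr : (0 : R) <= r%:R by [].
have hpr : (r%:R : R) <= p%:R by rewrite ler_nat.
move: h1 h2 hr hpr; set A := \sum_(0 <= k < r) s k; set B := \sum_(r <= k < p) s k.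
move: (r%:R : R) (p%:R : R) => rr pp h1 h2 hr hpr.
have : rr * B <= rr * ((pp - rr) * c) by apply: ler_wpM2l.
nra.
Qed.

Lemma rowsq_diag (R : realType) (p q : nat) (S : 'M[R]_(p, q))
  (hd : forall (i : 'I_p) (j : 'I_q), (i : nat) <> j -> S i j = 0)
  (i : 'I_p) (j : 'I_q) : (i : nat) = j ->
  \sum_(j' < q) S i j' * S i j' = S i j * S i j.
Proof.
move=> e; rewrite (bigD1 j) //= big1 ?addr0 // => j' hj'.
rewrite hd ?mul0r // => e'; move/eqP: hj'; apply; apply: ord_inj.
by rewrite -e' e.
Qed.

Lemma pidS (R : realType) (p q r : nat) (hrp : (r <= p)%N) (S : 'M[R]_(p, q))
  (i : 'I_r) (j : 'I_q) :
  ((pid_mx r : 'M[R]_(r, p)) *m S) i j = S (widen_ord hrp i) j.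
Proof.
rewrite mxE (bigD1 (widen_ord hrp i)) //= big1 ?addr0.
  by rewrite mxE /= eqxx ltn_ord mul1r.
move=> k hk; rewrite mxE.
case: eqP => [e|]; last by rewrite mul0r.
by move/eqP: hk; case; apply: val_inj; rewrite /= e.
Qed.

Lemma svd_bound (R : realType) (p q r : nat) (G : 'M[R]_(p, q))
  (U : 'M[R]_p) (S : 'M[R]_(p, q)) (V : 'M[R]_q) :
  (p <= q)%N -> (0 < r)%N -> (r <= p)%N -> is_svd G U S V ->
  r%:R / p%:R * fi G G <=
  fi ((U *m (pid_mx r : 'M[R]_(p, r)))^T *m G) ((U *m (pid_mx r : 'M[R]_(p, r)))^T *m G).
Proof.
move=> pq r0 rp [hU [hV [hd [hnn [hmono ->]]]]].
have -> : (U *m (pid_mx r : 'M[R]_(p, r)))^T *m (U *m S *m V^T) = ((pid_mx r : 'M[R]_(r, p)) *m S) *m V^T.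
  by rewrite trmx_mul tr_pid_mx -!mulmxA [U^T *m _]mulmxA hU mul1mx.
rewrite (fi_orthR _ hV) (fi_orthR _ hV) (fi_orthL _ hU).
clear G; case: p pq rp U S hU hd hnn hmono => [|p'] pq rp U S hU hd hnn hmono.
  by move: (leq_trans r0 rp).
set s := fun k : nat => \sum_(j < q) S (inord k) j * S (inord k) j.
have hSS : fi S S = \sum_(0 <= k < p'.+1) s k.
  by rewrite big_mkord; apply: eq_bigr => i _; rewrite /s inord_val.
have hBB : fi ((pid_mx r : 'M[R]_(r, p'.+1)) *m S) (pid_mx r *m S) = \sum_(0 <= k < r) s k.
  rewrite big_mkord; apply: eq_bigr => i _; apply: eq_bigr => j _.
  rewrite !pidS; congr (S _ j * S _ j); apply: val_inj; rewrite /= inordK //;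
  exact: leq_trans (ltn_ord i) rp.
rewrite hSS hBB.
have p0 : (0 : R) < p'.+1%:R by rewrite ltr0n.
rewrite mulrAC ler_pdivrMr // [X in _ <= X]mulrC.
apply: sum_mono => // i j ij jp.
have iq : (i < q)%N by apply: leq_trans pq; apply: leq_ltn_trans jp.
have jq : (j < q)%N by apply: leq_trans pq.
rewrite /s (rowsq_diag hd (j := Ordinal jq)); last by rewrite /= inordK.
rewrite (rowsq_diag hd (j := Ordinal iq)); last by rewrite /= inordK //; apply: leq_ltn_trans jp.
have h := hmono (inord i) (Ordinal iq) (inord j) (Ordinal jq).
have hj0 := hnn (inord j) (Ordinal jq).
rewrite !inordK // in h; last by apply: leq_ltn_trans jp.
have := h erefl erefl ij.
move: (S (inord i) (Ordinal iq)) (S (inord j) (Ordinal jq)) hj0 => a b hb hab.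
by apply: ler_pM.
Qed.

Definition lproj (R : realType) (p q k : nat) (b : bool) (P : 'M[R]_(p, k))
  (Q : 'M[R]_(q, k)) (A : 'M[R]_(p, q)) : 'M[R]_(p, q) :=
  if b then P *m P^T *m A else A *m Q *m Q^T.

Lemma lprojT (R : realType) (p q k : nat) (Q : 'M[R]_(q, k)) (A : 'M[R]_(p, q)) :
  A *m Q *m Q^T = (Q *m Q^T *m A^T)^T.
Proof. by rewrite !trmx_mul !trmxK mulmxA. Qed.

Lemma lp1 (R : realType) (p q k : nat) b (P : 'M[R]_(p, k)) (Q : 'M[R]_(q, k))
  (A : 'M[R]_(p, q)) : P^T *m P = 1%:M -> Q^T *m Q = 1%:M ->
  fi A (lproj b P Q A) = fi (lproj b P Q A) (lproj b P Q A).
Proof.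
move=> hP hQ; rewrite /lproj; case: b; first exact: fiP1.
by rewrite lprojT -{1}(trmxK A) !fi_trT fiP1.
Qed.

Lemma lp2 (R : realType) (p q k : nat) b (P : 'M[R]_(p, k)) (Q : 'M[R]_(q, k))
  (A : 'M[R]_(p, q)) : P^T *m P = 1%:M -> Q^T *m Q = 1%:M ->
  fi (lproj b P Q A) (lproj b P Q A) <= fi A A.
Proof.
move=> hP hQ; rewrite /lproj; case: b; first exact: fiP2.
by rewrite lprojT fi_trT -(fi_trT A); apply: fiP2.
Qed.

Lemma lp3 (R : realType) (p q k : nat) b (P : 'M[R]_(p, k)) (Q : 'M[R]_(q, k))
  (A B : 'M[R]_(p, q)) :
  lproj b P Q (A - B) = lproj b P Q A - lproj b P Q B.
Proof. by rewrite /lproj; case: b; rewrite ?mulmxBr ?mulmxBl. Qed.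

Lemma galore_orth (R : realType) (p q r : nat) (G : 'M[R]_(p, q))
  (P : 'M[R]_(p, r)) (Q : 'M[R]_(q, r)) :
  (r <= p)%N -> (r <= q)%N -> galore_proj G P Q ->
  P^T *m P = 1%:M /\ Q^T *m Q = 1%:M.
Proof.
move=> rp rq [U [S [V [[hU [hV _]] [-> ->]]]]]; split.
  by rewrite trmx_mul tr_pid_mx -mulmxA [U^T *m _]mulmxA hU mul1mx pid_mx_id // pid_mx_1.
by rewrite trmx_mul tr_pid_mx -mulmxA [V^T *m _]mulmxA hV mul1mx pid_mx_id // pid_mx_1.
Qed.

Lemma svd_T (R : realType) (p q : nat) (G : 'M[R]_(p, q))
  (U : 'M[R]_p) (S : 'M[R]_(p, q)) (V : 'M[R]_q) :
  is_svd G U S V -> is_svd G^T V S^T U.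
Proof.
move=> [hU [hV [hd [hnn [hmono ->]]]]]; split; first by [].
split; first by [].
split; first by move=> i j ij; rewrite mxE hd // => e; apply: ij.
split; first by move=> i j; rewrite mxE.
split; first by move=> i1 j1 i2 j2 e1 e2 le; rewrite !mxE; apply: hmono => //; rewrite -e1 -e2.
by rewrite !trmx_mul trmxK mulmxA.
Qed.

Lemma lp_svd (R : realType) (p q r : nat) (G : 'M[R]_(p, q))
  (P : 'M[R]_(p, r)) (Q : 'M[R]_(q, r)) :
  (0 < r)%N -> (r <= minn p q)%N -> galore_proj G P Q ->
  r%:R / (minn p q)%:R * fi G G <= fi (lproj (p <= q)%N P Q G) (lproj (p <= q)%N P Q G).
Proof.
move=> r0 rmin hg.
have rp : (r <= p)%N by apply: leq_trans rmin (geq_minl _ _).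
have rq : (r <= q)%N by apply: leq_trans rmin (geq_minr _ _).
have [hP hQ] := galore_orth rp rq hg.
case: hg => [U [S [V [hsvd [eP eQ]]]]].
rewrite /lproj; case: ifP => pq.
  rewrite fiPT // eP; have -> : minn p q = p by apply/minn_idPl.
  exact: (svd_bound pq r0 rp hsvd).
have qp : (q <= p)%N by apply: ltnW; rewrite ltnNge pq.
rewrite lprojT fi_trT fiPT // eQ -(fi_trT G).
have -> : minn p q = q by apply/minn_idPr.
exact: (svd_bound qp r0 rq (svd_T hsvd)).
Qed.

Lemma param_ext (R : realType) (NL : nat) (m n : 'I_NL -> nat) (x y : param R m n) :
  (forall l i j, x l i j = y l i j) -> x = y.
Proof.
move=> H; apply: functional_extensionality_dep => l; apply/matrixP => i j; exact: H.
Qed.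

Lemma grad_line (R : realType) (NL : nat) (m n : 'I_NL -> nat)
  (f : param R m n -> R) (G : param R m n -> param R m n) (x v : param R m n) (t : R) :
  is_gradient f G ->
  is_derive t 1 (fun s => f (padd x (pscale s v))) (pinner (G (padd x (pscale t v))) v).
Proof.
move=> hg; have [d1 d2] := hg (padd x (pscale t v)) v.
set phi := fun s => f (padd x (pscale s v)).
set psi := fun s => f (padd (padd x (pscale t v)) (pscale s v)).
have E : (fun h : R => h^-1 *: ((phi \o shift t) (h *: (1 : R)) - phi t)) =
         (fun h : R => h^-1 *: ((psi \o shift 0) (h *: (1 : R)) - psi 0)).
  apply: funext => h; rewrite /phi /psi /=.
  congr (_ *: (f _ - f _)); apply: param_ext => l i j; rewrite /padd /pscale !mxE; ring.
split.
  by move: d1; rewrite /derivable -/psi -E.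
by move: d2; rewrite /derive -/psi -E.
Qed.

Lemma lip_sq (R : realType) (NL : nat) (m n : 'I_NL -> nat)
  (G : param R m n -> param R m n) (L : R) (x y : param R m n) :
  lipschitz_grad G L ->
  psqnorm (psub (G x) (G y)) <= L ^+ 2 * psqnorm (psub x y).
Proof.
move=> hl; have h := hl x y; move: h; rewrite /pnorm => h.
have a0 := sqrtr_ge0 (psqnorm (psub (G x) (G y))).
have := ler_pM a0 a0 h h.
rewrite -!expr2 sqr_sqrtr ?psq_ge0 // exprMn sqr_sqrtr ?psq_ge0 //.
Qed.

Local Open Scope classical_set_scope.

Lemma descent (R : realType) (NL : nat) (m n : 'I_NL -> nat)
  (f : param R m n -> R) (G : param R m n -> param R m n) (L lam : R)
  (x v : param R m n) :
  is_gradient f G -> lipschitz_grad G L -> 0 < lam ->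
  2 * lam * f (padd x v) <=
  2 * lam * f x + 2 * lam * pinner (G x) v + (L ^+ 2 + lam ^+ 2) * psqnorm v.
Proof.
move=> hg hl lam0.
set phi := fun s => f (padd x (pscale s v)).
set dphi := fun s => pinner (G (padd x (pscale s v))) v.
have hd : forall s : R, is_derive s (1 : R) phi (dphi s) by move=> s; exact: grad_line.
have hc := @derivable_within_continuous R _ phi (Interval (BLeft (0:R)) (BRight 1))
  (fun s _ => @ex_derive _ _ _ _ _ _ _ (hd s)).
have [c c01 hmvt] := MVT_segment ler01 (fun s _ => hd s) hc.
have e1 : phi 1 = f (padd x v).
  by rewrite /phi; congr f; apply: param_ext => l i j; rewrite /padd /pscale !mxE mul1r.
have e0 : phi 0 = f x.
  by rewrite /phi; congr f; apply: param_ext => l i j; rewrite /padd /pscale !mxE mul0r addr0.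
rewrite e1 e0 subr0 mulr1 in hmvt.
have ed : dphi c = pinner (G x) v + pinner (psub (G (padd x (pscale c v))) (G x)) v.
  by rewrite pinner_subl /dphi; ring.
have hc0 : 0 <= c by move: c01; rewrite in_itv /= => /andP[].
have hc1 : c <= 1 by move: c01; rewrite in_itv /= => /andP[].
have hlip := lip_sq (padd x (pscale c v)) x hl.
have Ec : psub (padd x (pscale c v)) x = pscale c v.
  by apply: param_ext => l i j; rewrite /padd /psub /pscale !mxE; ring.
rewrite Ec psq_scale in hlip.
have ham := pamgm lam (psub (G (padd x (pscale c v))) (G x)) v.
have hv := psq_ge0 v.
have hL := sqr_ge0 L.
have hcc : c ^+ 2 <= 1 by rewrite expr_le1.
have : L ^+ 2 * (c ^+ 2 * psqnorm v) <= L ^+ 2 * psqnorm v.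
  by apply: ler_wpM2l => //; rewrite -[X in _ <= X]mul1r; apply: ler_wpM2r.
have e2 : f (padd x v) = f x + dphi c by rewrite -hmvt; ring.
rewrite e2 ed.
move: hlip ham hv hL hcc lam0.
set A := psqnorm (psub _ _); set B := pinner (psub _ _) v; set C := psqnorm v.
move=> hlip ham hv hL hcc lam0 h3.
nra.
Qed.

Fixpoint Ssum (R : realType) (tau : nat) (a : nat -> R) (t : nat) : R :=
  match t with
  | 0 => 0
  | t'.+1 => if (tau %| t'.+1)%N then 0 else Ssum tau a t' + a t'
  end.

Lemma Ssum_ge0 (R : realType) (tau : nat) (a : nat -> R) t :
  (forall t, 0 <= a t) -> 0 <= Ssum tau a t.
Proof.
move=> ha; elim: t => [|t IH] //=; case: ifP => // _; exact: addr_ge0.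
Qed.

Lemma windows (R : realType) (tau : nat) (a : nat -> R) (T : nat) :
  (0 < tau)%N -> (forall t, 0 <= a t) ->
  \sum_(t < T) Ssum tau a t <= tau%:R * \sum_(t < T) a t.
Proof.
move=> tau0 ha.
suff H : \sum_(t < T) Ssum tau a t + (tau%:R - (T %% tau)%:R) * Ssum tau a T
         <= tau%:R * \sum_(t < T) a t.
  have h1 : (0 : R) <= tau%:R - (T %% tau)%:R.
    by rewrite subr_ge0 ler_nat; apply: ltnW; rewrite ltn_pmod.
  have := mulr_ge0 h1 (Ssum_ge0 tau T ha); lra.
elim: T => [|T IH]; first by rewrite !big_ord0 /= mulr0 addr0.
rewrite !big_ord_recr /= modnS.
have hS := Ssum_ge0 tau T ha.
have haT := ha T.
have hk : ((T %% tau).+1 <= tau)%N by rewrite ltn_pmod.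
case: ifP => _.
  rewrite mulr0 addr0 mulrDr.
  have : (1 : R) <= tau%:R - (T %% tau)%:R.
    have : ((T %% tau).+1%:R : R) <= tau%:R by rewrite ler_nat.
    rewrite -natr1; lra.
  have ht : (0 : R) <= tau%:R by [].
  move: IH; set W := \sum_(i < T) _; set A := \sum_(i < T) _; move=> IH h1.
  have : Ssum tau a T <= (tau%:R - (T %% tau)%:R) * Ssum tau a T.
    by rewrite -[X in X <= _]mul1r; apply: ler_wpM2r.
  have := mulr_ge0 ht haT; lra.
rewrite mulrDr -natr1.
have hk' : ((T %% tau).+1%:R : R) <= tau%:R by rewrite ler_nat.
rewrite -natr1 in hk'.
move: IH; set W := \sum_(i < T) _; set A := \sum_(i < T) _; move=> IH.
have hk0 : (0 : R) <= (T %% tau)%:R by [].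
move: hk' hS haT IH hk0; move: ((T %% tau)%:R : R) (tau%:R : R) => k tt hk' hS haT IH hk0.
nra.
Qed.

Fixpoint anchor (A : Type) (tau : nat) (x : nat -> A) (t : nat) : A :=
  match t with
  | 0 => x 0%N
  | t'.+1 => if (tau %| t'.+1)%N then x t'.+1 else anchor tau x t'
  end.

Definition proj (R : realType) (NL : nat) (m n r : 'I_NL -> nat)
  (P : forall l : 'I_NL, 'M[R]_(m l, r l)) (Q : forall l : 'I_NL, 'M[R]_(n l, r l))
  (h : param R m n) : param R m n :=
  fun l => lproj (m l <= n l)%N (P l) (Q l) (h l).

Lemma pinner_scaler (R : realType) (NL : nat) (m n : 'I_NL -> nat) (c : R)
  (a b : param R m n) : pinner a (pscale c b) = c * pinner a b.
Proof.
rewrite !pinnerE -pS_scal; apply: eq_bigr => l _; apply: eq_bigr => i _.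
by apply: eq_bigr => j _; rewrite /pscale mxE; ring.
Qed.

Lemma proj1P (R : realType) (NL : nat) (m n r : 'I_NL -> nat)
  (P : forall l : 'I_NL, 'M[R]_(m l, r l)) (Q : forall l : 'I_NL, 'M[R]_(n l, r l))
  (h : param R m n) :
  (forall l, (P l)^T *m P l = 1%:M /\ (Q l)^T *m Q l = 1%:M) ->
  pinner h (proj P Q h) = psqnorm (proj P Q h).
Proof.
by move=> ho; apply: eq_bigr => l _; have [h1 h2] := ho l; exact: (lp1 _ (h l) h1 h2).
Qed.

Lemma proj2P (R : realType) (NL : nat) (m n r : 'I_NL -> nat)
  (P : forall l : 'I_NL, 'M[R]_(m l, r l)) (Q : forall l : 'I_NL, 'M[R]_(n l, r l))
  (h : param R m n) :
  (forall l, (P l)^T *m P l = 1%:M /\ (Q l)^T *m Q l = 1%:M) ->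
  psqnorm (proj P Q h) <= psqnorm h.
Proof.
by move=> ho; apply: ler_sum => l _; have [h1 h2] := ho l; exact: (lp2 _ (h l) h1 h2).
Qed.

Lemma proj3P (R : realType) (NL : nat) (m n r : 'I_NL -> nat)
  (P : forall l : 'I_NL, 'M[R]_(m l, r l)) (Q : forall l : 'I_NL, 'M[R]_(n l, r l))
  (a b : param R m n) :
  proj P Q (psub a b) = psub (proj P Q a) (proj P Q b).
Proof. by apply: functional_extensionality_dep => l; rewrite /proj /psub lp3. Qed.

Lemma projSVD (R : realType) (NL : nat) (m n r : 'I_NL -> nat)
  (P : forall l : 'I_NL, 'M[R]_(m l, r l)) (Q : forall l : 'I_NL, 'M[R]_(n l, r l))
  (h : param R m n) (dlt : R) :
  (forall l : 'I_NL, (0 < r l)%N /\ (r l < minn (m l) (n l))%N) ->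
  (forall l, dlt <= (r l)%:R / (minn (m l) (n l))%:R) ->
  (forall l, galore_proj (h l) (P l) (Q l)) ->
  dlt * psqnorm h <= psqnorm (proj P Q h).
Proof.
move=> hr hd hg; rewrite /psqnorm /pinner mulr_sumr; apply: ler_sum => l _.
have [r0 rmin] := hr l.
apply: le_trans (_ : (r l)%:R / (minn (m l) (n l))%:R * fi (h l) (h l) <= _).
  by apply: ler_wpM2r; [exact: fi_ge0 | exact: hd].
exact: (lp_svd r0 (ltnW rmin) (hg l)).
Qed.

Lemma psq_subC (R : realType) (NL : nat) (m n : 'I_NL -> nat) (a b : param R m n) :
  psqnorm (psub a b) = psqnorm (psub b a).
Proof.
rewrite /psqnorm !pinnerE; apply: eq_bigr => l _; apply: eq_bigr => i _.
by apply: eq_bigr => j _; rewrite /psub !mxE; ring.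
Qed.

Lemma psq_self (R : realType) (NL : nat) (m n : 'I_NL -> nat) (a : param R m n) :
  psqnorm (psub a a) = 0.
Proof.
rewrite /psqnorm pinnerE /pS big1 // => l _; rewrite big1 // => i _; rewrite big1 // => j _.
by rewrite /psub !mxE subrr mulr0.
Qed.

Lemma main_case (R : realType) (NL : nat) (m n r : 'I_NL -> nat)
    (f : param R m n -> R) (G : param R m n -> param R m n) (L : R)
    (x0 : param R m n) (T tau : nat) (eta dlt : R)
    (x : nat -> param R m n)
    (P : nat -> forall l : 'I_NL, 'M[R]_(m l, r l))
    (Q : nat -> forall l : 'I_NL, 'M[R]_(n l, r l))
    (Mp : nat -> forall l : 'I_NL, 'M[R]_(r l, n l))
    (Mq : nat -> forall l : 'I_NL, 'M[R]_(m l, r l)) :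
  (forall l : 'I_NL, (0 < r l)%N /\ (r l < minn (m l) (n l))%N) ->
  bounded_below f -> is_gradient f G -> lipschitz_grad G L -> 0 < L ->
  0 < dlt -> dlt <= 1 -> (forall l, dlt <= (r l)%:R / (minn (m l) (n l))%:R) ->
  (0 < tau)%N -> 0 < eta -> eta * L <= 1 / 4 -> eta * L * tau%:R <= 1 ->
  galore_mp_det_run G eta 1 tau x0 x P Q Mp Mq ->
  dlt * eta * \sum_(t < T) psqnorm (G (x t)) <= 22 * Delta f x0.
Proof.
move=> hr hbb hg hl L0 d0 d1 hd tau0 eta0 hetaL hetaLt [hx0 hrun].
have hrl l : (r l <= m l)%N /\ (r l <= n l)%N.
  have [_ h] := hr l; split; apply: ltnW; apply: leq_trans h _;
    [exact: geq_minl | exact: geq_minr].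
pose pr t := proj (P t) (Q t).
pose a t := psqnorm (pr t (G (x t))).
pose y := anchor tau x.
have inv : forall t, (forall l, (P t l)^T *m P t l = 1%:M /\ (Q t l)^T *m Q t l = 1%:M) /\
    dlt * psqnorm (G (y t)) <= psqnorm (pr t (G (y t))).
  have reset t : (tau %| t)%N -> y t = x t ->
      (forall l, (P t l)^T *m P t l = 1%:M /\ (Q t l)^T *m Q t l = 1%:M) /\
      dlt * psqnorm (G (y t)) <= psqnorm (pr t (G (y t))).
    move=> dt yt.
    have hgp l : galore_proj (G (x t) l) (P t l) (Q t l).
      by have [+ _] := hrun t l; rewrite /dvdn in dt; rewrite dt.
    split.
      move=> l; have [h1 h2] := hrl l; exact: (galore_orth h1 h2 (hgp l)).
    by rewrite yt; apply: projSVD.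
  elim=> [|t [IHo IHd]]; first by apply: reset; rewrite ?dvdn0.
  case dt: (tau %| t.+1)%N.
    by apply: reset => //; rewrite /y /= dt.
  have eP l : P t.+1 l = P t l /\ Q t.+1 l = Q t l.
    by have [+ _] := hrun t.+1 l; rewrite /dvdn in dt; rewrite dt.
  have ey : y t.+1 = y t by rewrite /y /= dt.
  have epr : pr t.+1 = pr t.
    rewrite /pr; congr proj; apply: functional_extensionality_dep => l; by case: (eP l).
  split; first by move=> l; case: (eP l) => -> ->; exact: IHo.
  by rewrite ey epr.
have orth t := (inv t).1.
have upd : forall t, x t.+1 = psub (x t) (pscale eta (pr t (G (x t)))).
  move=> t; apply: functional_extensionality_dep => l.
  have [_ +] := hrun t l; rewrite /pr /proj /lproj /psub /pscale.
  by case: ifP => _ [-> ->]; case: t => [|t]; rewrite ?subrr ?scale0r ?add0r scale1r ?mulmxA.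
have hA t : 0 <= a t by apply: psq_ge0.
have dec : forall t, f (x t.+1) <= f (x t) - 3 / 4 * eta * a t.
  move=> t.
  set d := pr t (G (x t)).
  have h := descent (lam := L) (x t) (pscale (-eta) d) hg hl L0.
  have e1 : padd (x t) (pscale (- eta) d) = x t.+1.
    by rewrite upd; apply: param_ext => l i j; rewrite /padd /psub /pscale !mxE; ring.
  rewrite e1 pinner_scaler proj1P ?psq_scale ?sqrrN in h; last exact: (orth t).
  rewrite -/d -/(a t) in h.
  have haa := hA t.
  have : 2 * L * (f (x t.+1) - (f (x t) - 3 / 4 * eta * a t)) <= 0.
    have hx : eta * L * (eta * a t) <= 1 / 4 * (eta * a t).
      by apply: ler_wpM2r => //; apply: mulr_ge0 => //; apply: ltW.
    move: h hx; rewrite /d; move: (a t) (f (x t.+1)) (f (x t)) => A F1 F0 h hx.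
    nra.
  rewrite pmulr_rle0 ?mulr_gt0 //; lra.
have sumA : forall T', 3 / 4 * eta * \sum_(t < T') a t <= f x0 - f (x T').
  elim=> [|T' IH]; first by rewrite big_ord0 hx0 mulr0 subrr.
  rewrite big_ord_recr /= mulrDr; have := dec T'; lra.
have infle : inf (range f) <= f (x T).
  have hlb : has_lbound (range f).
    by case: hbb => c hc; exists c => _ [z _ <-].
  by apply: ge_inf => //; exists (x T).
have hAD : 3 / 4 * eta * \sum_(t < T) a t <= Delta f x0.
  by rewrite /Delta; have := sumA T; lra.
pose D t := psqnorm (psub (y t) (x t)).
have hD : forall t, D t <= 2 * (t %% tau)%:R * eta ^+ 2 * Ssum tau a t.
  elim=> [|t IH].
    by rewrite /D /y /= psq_self mod0n ?mulr0 ?mul0r.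
  have hS := Ssum_ge0 tau t hA.
  rewrite /D /=; case dt: (tau %| t.+1)%N.
    by rewrite /y /= dt psq_self mulr0.
  rewrite modnS dt.
  have ey : y t.+1 = y t by rewrite /y /= dt.
  have e2 : psub (y t.+1) (x t.+1) = psub (psub (y t) (x t)) (pscale (- eta) (pr t (G (x t)))).
    by rewrite ey upd; apply: param_ext => l i j; rewrite /psub /pscale !mxE; ring.
  rewrite e2; rewrite -/(D t) in IH.
  have hat := hA t.
  have hDt : 0 <= D t by apply: psq_ge0.
  have he : 0 <= eta ^+ 2 by apply: sqr_ge0.
  case k0: (t %% tau)%N => [|k].
    rewrite k0 mulr0 mul0r in IH.
    have := psq_step (k := 1) (- eta) (psub (y t) (x t)) (pr t (G (x t))) ler01.
    rewrite sqrrN -/(a t) -/(D t) mul1r.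
    have : 0 <= eta ^+ 2 * Ssum tau a t by apply: mulr_ge0.
    lra.
  rewrite k0 in IH.
  have kpos : (0 : R) < k.+1%:R by rewrite ltr0n.
  have := psq_step (k := k.+1%:R) (- eta) (psub (y t) (x t)) (pr t (G (x t))) (ltW kpos).
  rewrite sqrrN -/(a t) -/(D t) => hst.
  rewrite -(ler_pM2l kpos).
  move: hst IH kpos hS hat hDt he; set E := psqnorm _.
  have ek : (k.+2%:R : R) = k.+1%:R + 1 by rewrite natr1.
  rewrite ek.
  move: (k.+1%:R : R) (eta ^+ 2) => kk e2' hst IH kpos hS hat hDt he.
  have h1 : (kk + 1) * D t <= (kk + 1) * (2 * kk * e2' * Ssum tau a t).
    by apply: ler_wpM2l => //; lra.
  have h2 : 0 <= kk * (kk + 1) * e2' * a t.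
    by apply: mulr_ge0 => //; apply: mulr_ge0 => //; apply: mulr_ge0; lra.
  have h3 : 0 <= kk * (kk + 1) * e2' * Ssum tau a t.
    by apply: mulr_ge0 => //; apply: mulr_ge0 => //; apply: mulr_ge0; lra.
  nra.
have hGb : forall t, dlt * psqnorm (G (x t)) <= 4 * a t + 6 * L ^+ 2 * D t.
  move=> t.
  set gt := G (x t); set gy := G (y t).
  have h1 : psqnorm gt <= 2 * psqnorm gy + 2 * psqnorm (psub gt gy).
    have E : gt = padd gy (psub gt gy).
      by apply: param_ext => l i j; rewrite /padd /psub !mxE; ring.
    by rewrite {1}E; exact: psq_add2.
  have h2 : psqnorm (pr t gy) <= 2 * psqnorm (pr t gt) + 2 * psqnorm (psub (pr t gy) (pr t gt)).
    have E : pr t gy = padd (pr t gt) (psub (pr t gy) (pr t gt)).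
      by apply: param_ext => l i j; rewrite /padd /psub !mxE; ring.
    by rewrite {1}E; exact: psq_add2.
  have h3 : psqnorm (psub (pr t gy) (pr t gt)) <= psqnorm (psub gy gt).
    by rewrite /pr -proj3P; apply: proj2P; exact: (orth t).
  have h4 : psqnorm (psub gy gt) <= L ^+ 2 * D t by apply: lip_sq.
  have h5 := (inv t).2; rewrite -/gy in h5.
  rewrite psq_subC in h1.
  have h6 : dlt * psqnorm gt <= dlt * (2 * psqnorm gy + 2 * psqnorm (psub gy gt)).
    by apply: ler_wpM2l => //; apply: ltW.
  have h7 : dlt * psqnorm (psub gy gt) <= psqnorm (psub gy gt).
    by rewrite -[X in _ <= X]mul1r; apply: ler_wpM2r => //; apply: psq_ge0.
  rewrite /a -/gt; lra.
have sD : \sum_(t < T) D t <= 2 * tau%:R ^+ 2 * eta ^+ 2 * \sum_(t < T) a t.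
  apply: (@le_trans _ _ (\sum_(t < T) (2 * tau%:R * eta ^+ 2) * Ssum tau a t)).
    apply: ler_sum => t _; apply: le_trans (hD t) _.
    apply: ler_wpM2r; first exact: Ssum_ge0.
    apply: ler_wpM2r; first exact: sqr_ge0.
    apply: ler_wpM2l => //; rewrite ler_nat; apply: ltnW; exact: ltn_pmod.
  rewrite -mulr_sumr.
  have := windows T tau0 hA.
  have : 0 <= 2 * tau%:R * eta ^+ 2 by apply: mulr_ge0 => //; apply: sqr_ge0.
  move=> hp hw; have := ler_wpM2l hp hw.
  rewrite expr2; lra.
have sG : dlt * \sum_(t < T) psqnorm (G (x t)) <= 4 * \sum_(t < T) a t + 6 * L ^+ 2 * \sum_(t < T) D t.
  rewrite mulr_sumr !mulr_sumr -big_split /=; apply: ler_sum => t _; exact: hGb.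
have sA0 : 0 <= \sum_(t < T) a t by apply: sumr_ge0.
have hLt : (L * tau%:R * eta) ^+ 2 <= 1.
  rewrite expr_le1 //; last by apply: mulr_ge0; [apply: mulr_ge0 => //; exact: ltW | exact: ltW].
  by rewrite mulrC mulrA.
have : 6 * L ^+ 2 * \sum_(t < T) D t <= 12 * \sum_(t < T) a t.
  have hL2 : 0 <= 6 * L ^+ 2 by apply: mulr_ge0 => //; apply: sqr_ge0.
  have := ler_wpM2l hL2 sD.
  have : (L * tau%:R * eta) ^+ 2 * \sum_(t < T) a t <= \sum_(t < T) a t.
    by rewrite -[X in _ <= X]mul1r; apply: ler_wpM2r.
  rewrite !exprMn; lra.
move=> h12.
have hfin : dlt * \sum_(t < T) psqnorm (G (x t)) <= 16 * \sum_(t < T) a t by lra.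
have := ler_wpM2l (ltW eta0) hfin.
rewrite mulrA [eta * dlt]mulrC.
have e : eta * (16 * \sum_(t < T) a t) = 64 / 3 * (3 / 4 * eta * \sum_(t < T) a t) by field.
have : 0 <= 3 / 4 * eta * \sum_(t < T) a t.
  by apply: mulr_ge0 => //; apply: mulr_ge0 => //; apply: ltW.
rewrite e; lra.
Qed.

Lemma sqrt_leY (R : realType) (X Y : R) : 0 <= Y -> X <= Y ^+ 2 -> Num.sqrt X <= Y.
Proof.
move=> y0 h; rewrite -(ger0_norm y0) -sqrtr_sqr ler_sqrt //; exact: sqr_ge0.
Qed.

Lemma eta_bound (R : realType) (L dlt tau : R) :
  0 < L -> 0 < dlt -> dlt <= 1 -> 0 <= tau -> tau <= 64 / (3 * dlt) + 1 ->
  4 * L + Num.sqrt (80 * L ^+ 2 / (3 * dlt)) + Num.sqrt (80 * tau ^+ 2 * L ^+ 2 / (3 * dlt))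
    + Num.sqrt (16 * tau * L ^+ 2 / 3) <= 142 * L * (Num.sqrt dlt)^-1 ^+ 3.
Proof.
move=> L0 d0 d1 t0 ht.
set q := Num.sqrt dlt.
have q0 : 0 < q by rewrite sqrtr_gt0.
have edlt : dlt = q ^+ 2 by rewrite sqr_sqrtr // ltW.
set u := q^-1.
have u0 : 0 < u by rewrite invr_gt0.
have U2 : 1 <= u ^+ 2.
  have q1 : q ^+ 2 <= 1 by rewrite -edlt.
  rewrite /u exprVn; rewrite -invr1 lef_pV2 ?posrE //; by apply: exprn_gt0.
set v := u ^+ 2.
have U2v : 1 <= v := U2.
have v0 : 0 <= v by apply: le_trans ler01 U2.
have v2 : 1 <= v ^+ 2 by rewrite expr2; have := ler_pM ler01 ler01 U2 U2; rewrite mulr1.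
have v1 : v <= v ^+ 3.
  by rewrite -[X in X <= _]mulr1 exprS; apply: ler_wpM2l.
have u31 : 1 <= u ^+ 3.
  have h : 1 <= u ^+ 2 := U2.
  have u1 : 1 <= u by rewrite -(@expr_ge1 _ 2) // ltW.
  exact: exprn_ege1.
have LL : 0 <= L ^+ 2 by apply: sqr_ge0.
have eK : (L * u ^+ 3) ^+ 2 = L ^+ 2 * v ^+ 3 by rewrite /v exprMn -!exprM.
have e1 : 80 * L ^+ 2 / (3 * dlt) = 80 / 3 * (L ^+ 2 * v).
  by rewrite edlt /v /u exprVn; field; rewrite gt_eqF.
have htau : tau <= 23 * v.
  have : 64 / (3 * dlt) = 64 / 3 * v by rewrite edlt /v /u exprVn; field; rewrite gt_eqF.
  move=> e; rewrite e in ht; lra.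
have e2 : 80 * tau ^+ 2 * L ^+ 2 / (3 * dlt) = 80 / 3 * tau ^+ 2 * (L ^+ 2 * v).
  by rewrite edlt /v /u exprVn; field; rewrite gt_eqF.
have s1 : Num.sqrt (80 * L ^+ 2 / (3 * dlt)) <= 6 * (L * u ^+ 3).
  apply: sqrt_leY; first by apply: mulr_ge0 => //; apply: mulr_ge0; lra.
  rewrite e1 exprMn eK -[(6:R) ^+ 2]/((6:R) * 6).
  have : L ^+ 2 * v <= L ^+ 2 * v ^+ 3 by apply: ler_wpM2l.
  have := mulr_ge0 LL v0.
  lra.
have s2 : Num.sqrt (80 * tau ^+ 2 * L ^+ 2 / (3 * dlt)) <= 120 * (L * u ^+ 3).
  apply: sqrt_leY; first by apply: mulr_ge0 => //; apply: mulr_ge0; lra.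
  rewrite e2 exprMn eK -[(120:R) ^+ 2]/((120:R) * 120).
  have ht2 : tau ^+ 2 <= 529 * v ^+ 2.
    have := ler_pM t0 t0 htau htau; rewrite -!expr2 exprMn; lra.
  have h1 : tau ^+ 2 * (L ^+ 2 * v) <= 529 * v ^+ 2 * (L ^+ 2 * v).
    by apply: ler_wpM2r => //; apply: mulr_ge0 => //; lra.
  have : 529 * v ^+ 2 * (L ^+ 2 * v) = 529 * (L ^+ 2 * v ^+ 3) by rewrite exprS; ring.
  have : 80 / 3 * tau ^+ 2 * (L ^+ 2 * v) = 80 / 3 * (tau ^+ 2 * (L ^+ 2 * v)) by ring.
  have := mulr_ge0 LL (exprn_ge0 3 v0).
  lra.
have s3 : Num.sqrt (16 * tau * L ^+ 2 / 3) <= 12 * (L * u ^+ 3).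
  apply: sqrt_leY; first by apply: mulr_ge0 => //; apply: mulr_ge0; lra.
  rewrite exprMn eK -[(12:R) ^+ 2]/((12:R) * 12).
  have := mulr_ge0 LL v0.
  have h1 : tau * L ^+ 2 <= 23 * (L ^+ 2 * v) by rewrite mulrC mulrCA; apply: ler_wpM2l.
  have : L ^+ 2 * v <= L ^+ 2 * v ^+ 3 by apply: ler_wpM2l.
  have : 16 * tau * L ^+ 2 / 3 = 16 / 3 * (tau * L ^+ 2) by field.
  lra.
have s0 : L <= L * u ^+ 3 by rewrite -[X in X <= _]mulr1; apply: ler_wpM2l => //; apply: ltW.
have -> : 142 * L * u ^+ 3 = 142 * (L * u ^+ 3) by ring.
lra.
Qed.

Lemma L_nonneg (R : realType) (NL : nat) (m n : 'I_NL -> nat)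
  (G : param R m n -> param R m n) (L : R) :
  (0 < NL)%N -> (forall l, (0 < m l)%N /\ (0 < n l)%N) -> lipschitz_grad G L -> 0 <= L.
Proof.
move=> NL0 hmn hl; rewrite leNgt; apply/negP => Lneg.
pose one : param R m n := fun l => const_mx 1.
pose zer : param R m n := fun l => 0.
have h := hl one zer.
have hpos : 0 < psqnorm (psub one zer).
  pose l0 : 'I_NL := Ordinal NL0.
  rewrite /psqnorm /pinner (bigD1 l0) //=.
  have hr : 0 <= \sum_(l < NL | l != l0) \sum_(i < m l) \sum_(j < n l)
      psub one zer l i j * psub one zer l i j.
    by apply: sumr_ge0 => l _; apply: sumr_ge0 => i _; apply: sumr_ge0 => j _;
      rewrite -expr2 sqr_ge0.
  have ht : 0 < \sum_(i < m l0) \sum_(j < n l0) psub one zer l0 i j * psub one zer l0 i j.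
    have e : forall i j, psub one zer l0 i j * psub one zer l0 i j = 1.
      by move=> i j; rewrite /psub /one /zer !mxE subr0 mulr1.
    under eq_bigr => i _ do under eq_bigr => j _ do rewrite e.
    rewrite sumr_const card_ord sumr_const card_ord -mulrnA.
    have [h1 h2] := hmn l0.
    by rewrite ltr0n muln_gt0 h1 h2.
  lra.
have hP : 0 < pnorm (psub one zer) by rewrite /pnorm sqrtr_gt0.
have hB := sqrtr_ge0 (psqnorm (psub (G one) (G zer))).
have hLB : L * pnorm (psub one zer) < 0 by rewrite nmulr_rlt0.
move: h hB hLB; rewrite /pnorm; lra.
Qed.

Lemma L_zero (R : realType) (NL : nat) (m n : 'I_NL -> nat)
  (f : param R m n -> R) (G : param R m n -> param R m n) (z : param R m n) :
  is_gradient f G -> lipschitz_grad G 0 -> bounded_below f -> psqnorm (G z) <= 0.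
Proof.
move=> hg hl [c hc].
rewrite leNgt; apply/negP => gpos.
set G2 := psqnorm (G z) in gpos.
have hfc := hc z.
set s := 2 * (f z - c + 1) / G2.
have s0 : 0 < s by rewrite /s divr_gt0 //; lra.
have si : 0 < s^-1 by rewrite invr_gt0.
have h := descent (lam := s^-1) z (pscale (- s) (G z)) hg hl si.
rewrite pinner_scaler psq_scale -/(psqnorm (G z)) -/G2 sqrrN in h.
have hz := hc (padd z (pscale (- s) (G z))).
have sne : s != 0 by rewrite gt_eqF.
have := ler_wpM2l (ltW s0) h.
have -> : s * (2 * s^-1 * f (padd z (pscale (- s) (G z)))) = 2 * f (padd z (pscale (- s) (G z))).
  by field.
have -> : s * (2 * s^-1 * f z + 2 * s^-1 * (- s * G2) + (0 ^+ 2 + s^-1 ^+ 2) * (s ^+ 2 * G2))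
          = 2 * f z - s * G2 by field.
have -> : s * G2 = 2 * (f z - c + 1) by rewrite /s; field; rewrite gt_eqF.
lra.
Qed.

Theorem theorem2 :
  exists C : nat,
  forall (R : realType) (NL : nat) (m n r : 'I_NL -> nat)
    (f : param R m n -> R) (G : param R m n -> param R m n) (L : R)
    (x0 : param R m n) (T tau : nat) (beta1 eta : R)
    (x : nat -> param R m n)
    (P : nat -> forall l : 'I_NL, 'M[R]_(m l, r l))
    (Q : nat -> forall l : 'I_NL, 'M[R]_(n l, r l))
    (Mp : nat -> forall l : 'I_NL, 'M[R]_(r l, n l))
    (Mq : nat -> forall l : 'I_NL, 'M[R]_(m l, r l)),
    (0 < NL)%N ->
    (forall l : 'I_NL, (0 < r l)%N /\ (r l < minn (m l) (n l))%N) ->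
    bounded_below f ->                          (* Assumption 1 *)
    is_gradient f G ->                          (* G = grad f *)
    lipschitz_grad G L ->                       (* Assumption 2 *)
    0 < Delta f x0 ->
    let dlt := delta_min R m n r in
    64 / (3 * dlt) <= T%:R ->
    beta1 = 1 ->
    (tau : int) = Num.ceil (64 / (3 * dlt * beta1)) ->
    eta = (4 * L + Num.sqrt (80 * L ^+ 2 / (3 * dlt * beta1 ^+ 2))
             + Num.sqrt (80 * tau%:R ^+ 2 * L ^+ 2 / (3 * dlt))
             + Num.sqrt (16 * tau%:R * L ^+ 2 / (3 * beta1)))^-1 ->
    galore_mp_det_run G eta beta1 tau x0 x P Q Mp Mq ->
    T%:R^-1 * (\sum_(t < T) psqnorm (G (x t)))
      <= C%:R * (L * Delta f x0) / (dlt ^+ 2 * Num.sqrt dlt * T%:R).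
Proof.
exists 4000%N.
move=> R NL m n r f G L x0 T tau beta1 eta x P Q Mp Mq NL0 hr hbb hg hl hDel dlt hT hb htau heta hrun.
subst beta1.
have hmn l : (0 < m l)%N /\ (0 < n l)%N.
  have [r0 h] := hr l; split; apply: leq_trans r0 (ltnW (leq_trans h _));
    [exact: geq_minl | exact: geq_minr].
have d1 : dlt <= 1 by exact: bigmin_le_id.
have hd l : dlt <= (r l)%:R / (minn (m l) (n l))%:R by exact: bigmin_le.
have d0 : 0 < dlt.
  apply: (big_ind (fun v => 0 < v)) => //.
    by move=> a b ha hb; rewrite lt_min ha hb.
  move=> l _; have [r0 h] := hr l; apply: divr_gt0; rewrite ltr0n //.
  exact: leq_ltn_trans (leq0n _) h.
clearbody dlt.
have L0 := L_nonneg NL0 hmn hl.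
have T0 : 0 < T%:R :> R.
  apply: lt_le_trans hT; apply: divr_gt0 => //; apply: mulr_gt0 => //.
case: (eqVneq L 0) => [eL | nL].
  subst L.
  have hz t : psqnorm (G (x t)) <= 0 by apply: L_zero.
  rewrite !mul0r mulr0 mul0r.
  apply: mulr_ge0_le0; first by rewrite invr_ge0 ltW.
  by apply: sumr_le0 => t _.
have Lp : 0 < L by rewrite lt_def nL L0.
rewrite !expr1n !mulr1 in htau heta.
have hc := ceil_itv (64 / (3 * dlt)).
rewrite -htau in hc.
have etau : ((Posz tau - 1)%:~R : R) = tau%:R - 1 by rewrite intrB.
rewrite etau in hc.
have [hc1 hc2] := andP hc.
have ypos : 0 < 64 / (3 * dlt) by apply: divr_gt0 => //; apply: mulr_gt0.
have tau0 : (0 < tau)%N.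
  have : (0 : R) < tau%:R by apply: lt_le_trans hc2.
  by rewrite ltr0n.
have taule : tau%:R <= 64 / (3 * dlt) + 1 by lra.
set s1 := Num.sqrt (80 * L ^+ 2 / (3 * dlt)) in heta.
set s2 := Num.sqrt (80 * tau%:R ^+ 2 * L ^+ 2 / (3 * dlt)) in heta.
set s3 := Num.sqrt (16 * tau%:R * L ^+ 2 / 3) in heta.
set E := 4 * L + s1 + s2 + s3 in heta.
have hs1 : 0 <= s1 by apply: sqrtr_ge0.
have hs2 : 0 <= s2 by apply: sqrtr_ge0.
have hs3 : 0 <= s3 by apply: sqrtr_ge0.
have E0 : 0 < E by rewrite /E; lra.
have eta0 : 0 < eta by rewrite heta invr_gt0.
have hetaL : eta * L <= 1 / 4.
  rewrite heta mulrC ler_pdivrMr //; rewrite /E; lra.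
have s2ge : tau%:R * L <= s2.
  have hx : 0 <= tau%:R * L by apply: mulr_ge0 => //; apply: ltW.
  rewrite -(ger0_norm hx) -sqrtr_sqr /s2 ler_sqrt; last first.
    apply: mulr_ge0; last by rewrite invr_ge0; apply: mulr_ge0 => //; apply: ltW.
    by apply: mulr_ge0; [apply: mulr_ge0 | apply: sqr_ge0]; rewrite ?sqr_ge0.
  have e : 80 * tau%:R ^+ 2 * L ^+ 2 / (3 * dlt) = (tau%:R * L) ^+ 2 * (80 / (3 * dlt)).
    by rewrite exprMn; field; rewrite gt_eqF.
  rewrite e -[X in X <= _]mulr1; apply: ler_wpM2l; first exact: sqr_ge0.
  rewrite ler_pdivlMr; last by apply: mulr_gt0.
  lra.
have hetaLt : eta * L * tau%:R <= 1.
  rewrite heta -mulrA mulrC ler_pdivrMr // mul1r [L * _]mulrC /E; lra.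
have hmain := main_case T hr hbb hg hl Lp d0 d1 hd tau0 eta0 hetaL hetaLt hrun.
have hEb := eta_bound Lp d0 d1 (ler0n _ tau) taule.
rewrite -/s1 -/s2 -/s3 -/E in hEb.
set q := Num.sqrt dlt in hEb *.
have q0 : 0 < q by rewrite sqrtr_gt0.
have edlt : dlt = q ^+ 2 by rewrite sqr_sqrtr // ltW.
set u := q^-1 in hEb.
have u0 : 0 < u by rewrite invr_gt0.
set S := \sum_(t < T) psqnorm (G (x t)) in hmain *.
have S0 : 0 <= S by apply: sumr_ge0 => t _; apply: psq_ge0.
have eS : S = dlt * eta * S * (E * u ^+ 2).
  by rewrite heta edlt /u; field; rewrite !gt_eqF.
have hu2 : 0 < E * u ^+ 2 by apply: mulr_gt0 => //; apply: exprn_gt0.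
have hS1 : S <= 22 * Delta f x0 * (E * u ^+ 2).
  by rewrite {1}eS; apply: ler_wpM2r => //; apply: ltW.
have hS2 : 22 * Delta f x0 * (E * u ^+ 2) <= 22 * Delta f x0 * (142 * L * u ^+ 3 * u ^+ 2).
  apply: ler_wpM2l; first by apply: mulr_ge0 => //; apply: ltW.
  by apply: ler_wpM2r => //; apply: exprn_ge0; apply: ltW.
have hLD : 0 <= L * Delta f x0 * u ^+ 5.
  by apply: mulr_ge0; [apply: mulr_ge0; apply: ltW | apply: exprn_ge0; apply: ltW].
have e5 : 22 * Delta f x0 * (142 * L * u ^+ 3 * u ^+ 2) = 3124 * (L * Delta f x0 * u ^+ 5).
  by ring.
have hS : S <= 4000 * (L * Delta f x0 * u ^+ 5) by lra.
have eR : 4000%:R * (L * Delta f x0) / (dlt ^+ 2 * q * T%:R) =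
          4000 * (L * Delta f x0 * u ^+ 5) * T%:R^-1.
  by rewrite edlt /u; field; rewrite !gt_eqF.
rewrite eR mulrC; apply: ler_wpM2r => //; rewrite invr_ge0; exact: ltW.
Qed.
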